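(* For every instance of the game and every facility placement profile $\mathbf{s}$, every minimum neighborhood set $\mathrm{MNS}_{\mathbf{s}}(F^*,V^* )$ is uniquely determined, hence the class set $\mathcal{C}=\{C_1,C_2,\ldots\}$ of $\mathbf{s}$ is unique; moreover $\ell(C_i)<\ell(C_{i+1})$ for all $i\ge1$ for which $C_{i+1}$ exists.
   Context: Setting: a finite directed graph $H=(V,E,w)$ with vertex weights $w:V\to\mathbb{Q}_{>0}$ (vertices are clients), $w(X)=\sum_{v\in X}w(v)$, a finite set $F$ of facility agents, and a facility placement profile $\mathbf{s}=(s_f)_{f\in F}$ with $s_f\in V$. For $v\in V$ let $N(v)=\{v\}\cup\{u:(v,u)\in E\}$, $N_{\mathbf{s}}(v)=\{f\in F:s_f\in N(v)\}$, $A_{\mathbf{s}}(f)=\{v\in V: f\in N_{\mathbf{s}}(v)\}$ and $A_{\mathbf{s}}(T)=\bigcup_{f\in T}A_{\mathbf{s}}(f)$ for $T\subseteq F$. For nonempty $F^*\subseteq F$ and $V^*\subseteq V$, the minimum neighborhood set $\mathrm{MNS}_{\mathbf{s}}(F^*,V^* )$ is a subset of $F^*$ of largest cardinality among the nonempty $T\subseteq F^*$ minimizing $\frac{w(A_{\mathbf{s}}(T)\cap V^* )}{|T|}$. The class set is defined inductively: for $i\ge1$, while $F\setminus\bigcup_{j<i}F_j\neq\varnothing$, let $F_i=\mathrm{MNS}_{\mathbf{s}}\big(F\setminus\bigcup_{j<i}F_j,\ V\setminus\bigcup_{j<i}V_j\big)$ and $V_i=A_{\mathbf{s}}(F_i)\setminus\bigcup_{j<i}V_j$;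 the class is $C_i=(F_i,V_i)$ with average load $\ell(C_i)=w(V_i)/|F_i|$. *)

(* Defs.v *)
From mathcomp Require Import all_boot all_order all_algebra.
Set Implicit Arguments. Unset Strict Implicit. Unset Printing Implicit Defensive.
Import Order.TTheory GRing.Theory Num.Theory.
Local Open Scope ring_scope.

Section Game.
Variables (V : finType) (E : rel V) (w : V -> rat) (F : finType) (s : F -> V).

Definition attr (f : F) : {set V} := [set v | (s f == v) || E v (s f)].

Definition attrS (T : {set F}) : {set V} := \bigcup_(f in T) attr f.

Definition wt (X : {set V}) : rat := \sum_(v in X) w v.

Definition ratio (T : {set F}) (Vs : {set V}) : rat :=
  wt (attrS T :&: Vs) / (#|T|%:R).

Definition isMNS (Fs : {set F}) (Vs : {set V}) (T : {set F}) : Prop :=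
  [/\ T \subset Fs, T != set0,
      (forall T' : {set F}, T' \subset Fs -> T' != set0 -> ratio T Vs <= ratio T' Vs) &
      (forall T' : {set F}, T' \subset Fs -> T' != set0 -> ratio T' Vs = ratio T Vs ->
         (#|T'| <= #|T|)%N)].

(* cs is a class set built from the already covered facilities Fu and
   clients Vu (Fu = \bigcup_{j<i} F_j, Vu = \bigcup_{j<i} V_j). *)
Fixpoint classes_from (Fu : {set F}) (Vu : {set V})
    (cs : seq ({set F} * {set V})) : Prop :=
  match cs with
  | [::] => ~: Fu = set0
  | (Fi, Vi) :: cs' =>
      [/\ ~: Fu != set0, isMNS (~: Fu) (~: Vu) Fi,
          Vi = attrS Fi :\: Vu & classes_from (Fu :|: Fi) (Vu :|: Vi) cs']
  end.

Definition is_class_set (cs : seq ({set F} * {set V})) : Prop :=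
  classes_from set0 set0 cs.

Definition load (C : {set F} * {set V}) : rat := wt C.2 / (#|C.1|%:R).

End Game.

(* Main.v *)
Require Import Defs.
From mathcomp Require Import all_boot all_order all_algebra.
From mathcomp Require Import ring lra zify.
Set Implicit Arguments. Unset Strict Implicit.
Import Order.TTheory GRing.Theory Num.Theory.
Local Open Scope ring_scope.

Section Proofs.
Variables (V : finType) (E : rel V) (w : V -> rat) (F : finType) (s : F -> V).
Hypothesis w_pos : forall v, 0 < w v.

Lemma wt_ge0 (X : {set V}) : 0 <= wt w X.
Proof. by rewrite /wt; apply: sumr_ge0 => v _; apply: ltW. Qed.

Lemma wt_ID (X Y : {set V}) : wt w X = wt w (X :&: Y) + wt w (X :\: Y).
Proof. by rewrite /wt (big_setID Y). Qed.

Lemma wt_sub (X Y : {set V}) : X \subset Y -> wt w X <= wt w Y.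
Proof.
move=> sXY; rewrite (wt_ID Y X) (setIidPr sXY) lerDl; exact: wt_ge0.
Qed.

Lemma wt_UI (X Y : {set V}) : wt w (X :|: Y) + wt w (X :&: Y) = wt w X + wt w Y.
Proof.
rewrite (wt_ID (X :|: Y) X) (wt_ID Y X).
have -> : (X :|: Y) :&: X = X by apply/setP => v; rewrite !inE; case: (v \in X); case: (v \in Y).
have -> : (X :|: Y) :\: X = Y :\: X by apply/setP => v; rewrite !inE; case: (v \in X); case: (v \in Y).
rewrite setIC; ring.
Qed.

Lemma wt_disjU (X Y : {set V}) : X :&: Y = set0 -> wt w (X :|: Y) = wt w X + wt w Y.
Proof. by move=> h; rewrite -wt_UI h /wt big_set0 addr0. Qed.

Lemma attrSU (A B : {set F}) : attrS E s (A :|: B) = attrS E s A :|: attrS E s B.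
Proof. by rewrite /attrS bigcup_setU. Qed.

Lemma attrS_sub (A B : {set F}) : A \subset B -> attrS E s A \subset attrS E s B.
Proof.
move=> sAB; apply/subsetP => v /bigcupP [f fA vf].
by apply/bigcupP; exists f => //; apply: (subsetP sAB).
Qed.

Definition g (Vs : {set V}) (T : {set F}) := wt w (attrS E s T :&: Vs).

Lemma g_submod Vs (A B : {set F}) : g Vs (A :|: B) + g Vs (A :&: B) <= g Vs A + g Vs B.
Proof.
rewrite /g attrSU setIUl -(wt_UI (attrS E s A :&: Vs)) lerD2l; apply: wt_sub.
idtac.
apply/subsetP => v; rewrite !inE => /andP [vI vs].
have := subsetP (@attrS_sub _ _ (subsetIl A B)) v vI.
have := subsetP (@attrS_sub _ _ (subsetIr A B)) v vI.
by move=> -> ->; rewrite vs.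
Qed.

Lemma g_set0 Vs : g Vs set0 = 0.
Proof.
rewrite /g /attrS big_set0 set0I /wt big_set0 //.
Qed.

Lemma ratio_ge (l : rat) (Vs : {set V}) (T : {set F}) : T != set0 -> (l <= Defs.ratio E w s T Vs) = (l * #|T|%:R <= g Vs T).
Proof.
move=> hT; rewrite /ratio -/(g Vs T) ler_pdivlMr //.
by rewrite ltr0n card_gt0.
Qed.

Lemma ratio_le (l : rat) (Vs : {set V}) (T : {set F}) : T != set0 -> (Defs.ratio E w s T Vs <= l) = (g Vs T <= l * #|T|%:R).
Proof.
move=> hT; rewrite /ratio -/(g Vs T) ler_pdivrMr //.
by rewrite ltr0n card_gt0.
Qed.

Lemma MNS_unique (Fs : {set F}) (Vs : {set V}) (T1 T2 : {set F}) : isMNS E w s Fs Vs T1 -> isMNS E w s Fs Vs T2 -> T1 = T2.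
Proof.
suff H : forall T1 T2, isMNS E w s Fs Vs T1 -> isMNS E w s Fs Vs T2 -> T2 \subset T1.
  by move=> h1 h2; apply/eqP; rewrite eqEsubset !H.
move=> {}T1 {}T2 [s1 n1 m1 x1] [s2 n2 m2 x2].
set l := Defs.ratio E w s T1 Vs.
have e12 : Defs.ratio E w s T2 Vs = l by apply/eqP; rewrite eq_le m2 // m1.
have lb : forall T : {set F}, T \subset Fs -> l * #|T|%:R <= g Vs T.
  move=> T sT; have [->|nT] := eqVneq T set0; first by rewrite cards0 mulr0 g_set0.
  by rewrite -ratio_ge // m1.
have g1 : g Vs T1 = l * #|T1|%:R.
  by apply/eqP; rewrite eq_le lb // andbT -ratio_le.
have g2 : g Vs T2 = l * #|T2|%:R.
  by apply/eqP; rewrite eq_le lb // andbT -ratio_le // e12.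
have sU : T1 :|: T2 \subset Fs by rewrite subUset s1.
have sI : T1 :&: T2 \subset Fs by rewrite (subset_trans (subsetIl _ _)).
have nU : T1 :|: T2 != set0.
  by apply: contraNneq n1 => h; rewrite -subset0 -h subsetUl.
have gU : g Vs (T1 :|: T2) = l * #|T1 :|: T2|%:R.
  apply/eqP; rewrite eq_le lb // andbT.
  have := g_submod Vs T1 T2; rewrite g1 g2.
  have := lb _ sI; have := cardsUI T1 T2.
  move=> hc; have hc' : (#|T1 :|: T2|%:R + #|T1 :&: T2|%:R = #|T1|%:R + #|T2|%:R :> rat).
    by rewrite -!natrD hc.
  move=> hI hs.
  have e : l * #|T1 :|: T2|%:R = l * #|T1|%:R + l * #|T2|%:R - l * #|T1 :&: T2|%:R.
    have hU : (#|T1 :|: T2|%:R : rat) = #|T1|%:R + #|T2|%:R - #|T1 :&: T2|%:R by rewrite -hc' addrK.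
    by rewrite hU; ring.
  rewrite e; lra.
have : (#|T1 :|: T2| <= #|T1|)%N.
  apply: x1 => //; apply/eqP; rewrite eq_le ratio_le // gU lexx /=.
  by rewrite ratio_ge // gU.
move=> hc; have : T1 :|: T2 = T1.
  apply/eqP; rewrite eq_sym eqEcard subsetUl hc //.
by move=> <-; rewrite subsetUr.
Qed.

Lemma MNS_exists (Fs : {set F}) (Vs : {set V}) : Fs != set0 -> exists T, isMNS E w s Fs Vs T.
Proof.
move=> nF.
pose P := [pred T : {set F} | (T \subset Fs) && (T != set0)].
have PFs : P Fs by rewrite /P /= subxx nF.
case: (arg_minP (fun T => Defs.ratio E w s T Vs) PFs) => T1 PT1 minT1.
pose Q := [pred T | P T && (Defs.ratio E w s T Vs == Defs.ratio E w s T1 Vs)].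
have QT1 : Q T1 by apply/andP; split => //; exact/eqP.
case: (@arg_maxnP _ T1 Q (fun T => #|T|) QT1) => T2 /andP[PT2 /eqP e2] maxT2.
exists T2; case/andP: (PT2) => sT2 nT2; split => //.
- by move=> T' sT' nT'; rewrite e2; apply: minT1; rewrite /P /= sT' nT'.
- by move=> T' sT' nT' eT'; apply: maxT2; rewrite /Q /P /= sT' nT' eT' e2 eqxx.
Qed.

Lemma classes_exist n (Fu : {set F}) (Vu : {set V}) :
  (#|~: Fu| <= n)%N -> exists cs, classes_from E w s Fu Vu cs.
Proof.
elim: n Fu Vu => [|n IH] Fu Vu hc.
  exists [::]; apply/eqP; rewrite -cards_eq0; by move: hc; rewrite leqn0.
case: (eqVneq (~: Fu) set0) => h; first by exists [::].
case: (@MNS_exists (~: Fu) (~: Vu) h) => T hT.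
have [|cs hcs] := IH (Fu :|: T) (Vu :|: (attrS E s T :\: Vu)); last first.
  exists ((T, attrS E s T :\: Vu) :: cs); by split.
case: hT => sT nT _ _.
have hp : ~: (Fu :|: T) \proper ~: Fu.
  rewrite setCU; apply/properP; split; first exact: subsetIl.
  case/set0Pn: nT => x xT; exists x; first exact: (subsetP sT).
  by rewrite !inE xT andbF.
by move: (proper_card hp) hc; lia.
Qed.

Lemma classes_uniq (cs1 : seq ({set F} * {set V})) : forall Fu Vu cs2,
  classes_from E w s Fu Vu cs1 -> classes_from E w s Fu Vu cs2 -> cs1 = cs2.
Proof.
elim: cs1 => [|[F1 V1] cs1 IH] Fu Vu [|[F2 V2] cs2] //=.
- by move=> h; rewrite h eqxx => -[].
- by case=> /eqP h _ _ _ /h.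
- case=> _ m1 e1 c1 [_ m2 e2 c2].
  have eF := MNS_unique m1 m2; subst F2.
  have eV : V1 = V2 by rewrite e1 e2.
  subst V2; rewrite -eV in c2 *; congr (_ :: _); exact: IH _ _ _ c1 c2.
Qed.

Lemma load_step (Fu : {set F}) (Vu : {set V}) F1 V1 F2 V2 cs :
  classes_from E w s Fu Vu ((F1,V1)::(F2,V2)::cs) -> load w (F1,V1) < load w (F2,V2).
Proof.
case=> _ [sF1 nF1 m1 x1] e1 [_ [sF2 nF2 m2 x2] e2 _].
set Vs := ~: Vu; set l := Defs.ratio E w s F1 Vs.
have hl : load w (F1,V1) = l by rewrite /load /l /Defs.ratio /= e1 setDE.
have c1 : (0 < #|F1|)%N by rewrite card_gt0.
have c2 : (0 < #|F2|)%N by rewrite card_gt0.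
have g1 : wt w V1 = l * #|F1|%:R.
  by rewrite /l /Defs.ratio -setDE -e1 divfK // pnatr_eq0 -lt0n.
rewrite hl /load /= ltNge; apply/negP; rewrite ler_pdivrMr ?ltr0n // => hle.
have dis : F1 :&: F2 = set0.
  apply/setP => f; rewrite !inE; apply/negP => /andP [f1 f2].
  by have := subsetP sF2 f f2; rewrite !inE f1 orbT.
have sU : F1 :|: F2 \subset ~: Fu.
  rewrite subUset sF1 /=; apply: subset_trans sF2 _; rewrite setCU subsetIl //.
have nU : F1 :|: F2 != set0.
  by apply: contraNneq nF1 => h; rewrite -subset0 -h subsetUl.
have cU : #|F1 :|: F2| = (#|F1| + #|F2|)%N by rewrite -cardsUI dis cards0 addn0.
have gU : g Vs (F1 :|: F2) = wt w V1 + wt w V2.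
  rewrite /g attrSU -wt_disjU; last first.
    apply/setP => v; rewrite e2 e1 !inE.
    by case: (v \in attrS E s F1); case: (v \in attrS E s F2); case: (v \in Vu).
  congr wt; apply/setP => v; rewrite e2 e1 /Vs !inE.
  by case: (v \in attrS E s F1); case: (v \in attrS E s F2); case: (v \in Vu).
have rU : Defs.ratio E w s (F1 :|: F2) Vs = l.
  apply/eqP; rewrite eq_le m1 // andbT ratio_le // gU g1 cU natrD mulrDr lerD2l //.
have := x1 _ sU nU rU; rewrite cU; lia.
Qed.

Lemma load_inc (cs : seq ({set F} * {set V})) Fu Vu : classes_from E w s Fu Vu cs ->
  forall i : nat, (i.+1 < size cs)%N ->
       load w (nth (set0, set0) cs i) < load w (nth (set0, set0) cs i.+1).
Proof.
elim: cs Fu Vu => [|[F1 V1] cs IH] Fu Vu //.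
case: cs IH => [|[F2 V2] cs] IH hc i hi //.
case: i hi => [|i] hi; first exact: load_step hc.
case: hc => _ _ _ hc'; exact: IH _ _ hc' i hi.
Qed.

End Proofs.


Theorem mainTheorem6 (V : finType) (E : rel V) (w : V -> rat) (F : finType)
    (s : F -> V) (w_pos : forall v, 0 < w v) :
  (forall (Fs : {set F}) (Vs : {set V}), Fs != set0 ->
     exists! T : {set F}, isMNS E w s Fs Vs T) /\
  (exists! cs : seq ({set F} * {set V}), is_class_set E w s cs) /\
  (forall cs : seq ({set F} * {set V}), is_class_set E w s cs ->
     forall i : nat, (i.+1 < size cs)%N ->
       load w (nth (set0, set0) cs i) < load w (nth (set0, set0) cs i.+1)).
Proof.
split; [|split].
- move=> Fs Vs nF; have [T hT] : exists T, isMNS E w s Fs Vs T by apply: MNS_exists.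
  exists T; split => // T' hT'; by eapply MNS_unique; eassumption.
- have [cs hcs] : exists cs, classes_from E w s set0 set0 cs by apply: (@classes_exist _ _ _ _ _ #|~: (set0 : {set F})|).
  exists cs; split => // cs' hcs'; by eapply classes_uniq; eassumption.
- move=> cs hcs; by eapply load_inc; eassumption.
Qed.
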